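(* Let $t$ be a positive integer, let $M$ be a matroid with the $(t,2t)$-property, and let $(S_1,\ldots, S_n)$ be a $t$-echidna of $M$ with $n\geq3t-1$. Let $I$ be a $(t-1)$-element subset of $\{1,\dots,n\}$. Then for every $z\in E(M)-\bigcup_{i \in I}S_i$, there is a $2t$-element circuit of $M$ and a $2t$-element cocircuit of $M$ each containing $\{z\} \cup \bigcup_{i \in I}S_i$.
   Context: A matroid $M$ has the $(t,2t)$-property if every $t$-element subset of $E(M)$ is contained in both a $2t$-element circuit and a $2t$-element cocircuit of $M$. A $t$-echidna of order $n$ of $M$ is a partition $(S_1,\ldots,S_n)$ of a subset of $E(M)$ such that $|S_i|=2$ for all $i\in\{1,\dots,n\}$, and $\bigcup_{i\in I}S_i$ is a circuit of $M$ for every $I\subseteq\{1,\dots,n\}$ with $|I|=t$. *)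

(* Defs.v *)
From mathcomp Require Import all_boot.
Set Implicit Arguments. Unset Strict Implicit. Unset Printing Implicit Defensive.

Section Matroid.
Variable T : finType.
Variable E : {set T}.
Variable indep : pred {set T}.

Definition is_matroid : Prop :=
  [/\ forall X : {set T}, indep X -> X \subset E,
      indep set0,
      forall X Y : {set T}, indep Y -> X \subset Y -> indep X &
      forall X Y : {set T}, indep X -> indep Y -> #|X| < #|Y| ->
        exists2 e, e \in Y :\: X & indep (e |: X)].

Definition basis (B : {set T}) : bool :=
  indep B && [forall e in E :\: B, ~~ indep (e |: B)].

Definition circuit (C : {set T}) : bool :=
  [&& C \subset E, ~~ indep C & [forall X : {set T}, (X \proper C) ==> indep X]].

Definition dual_indep (X : {set T}) : bool :=
  (X \subset E) && [exists B : {set T}, basis B && [disjoint X & B]].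

End Matroid.

Definition cocircuit (T : finType) (E : {set T}) (indep : pred {set T})
  (C : {set T}) : bool := circuit E (dual_indep E indep) C.

Definition t2t_property (T : finType) (E : {set T}) (indep : pred {set T})
  (t : nat) : Prop :=
  forall X : {set T}, X \subset E -> #|X| = t ->
    (exists2 C, circuit E indep C & (#|C| = 2 * t) /\ X \subset C) /\
    (exists2 D, cocircuit E indep D & (#|D| = 2 * t) /\ X \subset D).

Definition echidna (T : finType) (E : {set T}) (indep : pred {set T})
  (t n : nat) (S : 'I_n -> {set T}) : Prop :=
  [/\ forall i, S i \subset E,
      forall i, #|S i| = 2,
      forall i j, i != j -> [disjoint S i & S j] &
      forall J : {set 'I_n}, #|J| = t -> circuit E indep (\bigcup_(i in J) S i)].

(* Main.v *)
Require Import Defs.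
From mathcomp Require Import all_boot zify.
Set Implicit Arguments. Unset Strict Implicit. Unset Printing Implicit Defensive.

Section M.
Variables (T : finType) (E : {set T}) (indep : pred {set T}).
Hypothesis hM : is_matroid E indep.

Lemma extend_indep k (I0 B : {set T}) : indep I0 -> indep B -> #|I0| + k = #|B| ->
  exists A : {set T}, [/\ indep A, I0 \subset A, A \subset I0 :|: B & #|A| = #|B|].
Proof.
case: hM => hE h0 hsub haug.
elim: k I0 => [|k IH] I0 hI hB hk.
  by exists I0; rewrite subsetUl subxx addn0 in hk *; split.
have [e /setDP[eB eI] hIe] := haug I0 B hI hB (ltac:(lia)).
have := IH (e |: I0) hIe hB; rewrite cardsU1 eI /=.
case => [|A [hA1 hA2 hA3 hA4]]; first lia.
exists A; split => //.
- by apply: subset_trans hA2; apply: subsetUr.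
- apply: (subset_trans hA3); apply/subsetP => y; rewrite !inE.
  by case/orP => [/orP [/eqP -> | ->] | ->]; rewrite ?eB ?orbT.
Qed.

Lemma basis_card (A B : {set T}) : basis E indep B -> indep A -> #|A| = #|B| ->
  basis E indep A.
Proof.
case: hM => hE h0 hsub haug.
move=> /andP [hB hBm] hA hc; rewrite /basis hA /=.
apply/forall_inP => e /setDP [eE eA]; apply/negP => hAe.
have [|e' /setDP [e'A e'B] hBe'] := haug B (e |: A) hB hAe.
  by rewrite cardsU1 eA; lia.
have e'E : e' \in E by apply: (subsetP (hE _ hAe)).
by move/forall_inP: hBm => /(_ e') ; rewrite inE e'B e'E hBe' => /(_ isT).
Qed.

Lemma ortho (C D : {set T}) x : circuit E indep C -> cocircuit E indep D ->
  x \in C -> x \in D -> (forall y, y \in C -> y \in D -> y = x) -> False.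
Proof.
have hM' := hM; case: hM' => hE h0 hsub haug.
case/and3P => CE Cdep /forall_inP Cmin.
case/and3P => DE Dndep /forall_inP Dmin xC xD hCD.
have hCx : indep (C :\ x).
  by apply: Cmin; rewrite properD1.
have : dual_indep E indep (D :\ x).
  by apply: Dmin; rewrite properD1.
case/andP => _ /existsP [B /andP [hB hdis]].
have hBi : indep B by case/andP: hB.
have hle : #|C :\ x| <= #|B|.
  rewrite leqNgt; apply/negP => hlt.
  have [e /setDP [eC eB] hBe] := haug B (C :\ x) hBi hCx hlt.
  have eE : e \in E by apply: (subsetP (hE _ hCx)).
  case/andP: hB => _ /forall_inP /(_ e); rewrite inE eB eE hBe => /(_ isT) //.
have [A [hA1 hA2 hA3 hA4]] := @extend_indep (#|B| - #|C :\ x|) _ _ hCx hBi (ltac:(lia)).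
have hAb := basis_card hB hA1 hA4.
move/negP: Dndep; apply; rewrite /dual_indep DE /=.
apply/existsP; exists A; rewrite hAb /=.
rewrite -setI_eq0; apply/eqP/setP => y; rewrite !inE; apply/negP => /andP [yD yA].
have yx : y != x.
  apply/negP => /eqP yx; subst y.
  move/negP: Cdep; apply; apply: (hsub _ _ hA1).
  apply/subsetP => w wC; case: (eqVneq w x) => [-> //|wx].
  by apply: (subsetP hA2); rewrite !inE wx.
move: (subsetP hA3 y yA); rewrite inE => /orP [].
- rewrite inE => /andP [_ yC]; by move/eqP: yx; apply; apply: hCD.
- move=> yB; by move: (disjointFl hdis yB); rewrite !inE yx yD.
Qed.
End M.

Lemma three_in_two (T : finType) (A : {set T}) a b c : #|A| = 2 ->
  a \in A -> b \in A -> c \in A -> a != b -> a != c -> b = c.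
Proof.
move=> /eqP /cards2P [u [v [uv ->]]]; rewrite !inE.
by case/orP => /eqP ->; case/orP => /eqP ->; case/orP => /eqP ->;
  rewrite ?eqxx // => _ _; apply/eqP; rewrite // eq_sym.
Qed.

Lemma subset_card_ex (I : finType) (A : {set I}) k : k <= #|A| ->
  exists2 B : {set I}, B \subset A & #|B| = k.
Proof.
elim: k => [|k IH] h; first by exists set0; rewrite ?sub0set ?cards0.
have [B BA Bk] := IH (ltnW h).
have : 0 < #|A :\: B| by rewrite cardsD (setIidPr BA); lia.
case/card_gt0P => a /setDP [aA aB].
exists (a |: B); last by rewrite cardsU1 aB Bk.
by apply/subsetP => w; rewrite !inE => /orP [/eqP -> //| /(subsetP BA)].
Qed.

Section E.
Variables (T : finType) (I : finType) (S : I -> {set T}).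
Hypothesis hS2 : forall i, #|S i| = 2.
Hypothesis hdis : forall i j, i != j -> [disjoint S i & S j].

Lemma card_bigcup2 (K : {set I}) : #|\bigcup_(k in K) S k| = 2 * #|K|.
Proof.
have [m hK] : exists m, #|K| = m by eexists.
elim: m K hK => [|m IH] K hK; rewrite hK.
  by rewrite (cards0_eq hK) big_set0 cards0.
have : 0 < #|K| by rewrite hK.
case/card_gt0P => k kK.
rewrite (cardsD1 k K) kK in hK.
rewrite (big_setD1 k kK) /= cardsU (IH (K :\ k)); last by lia.
have -> : S k :&: \bigcup_(j in K :\ k) S j = set0.
  apply/disjoint_setI0/bigcup_disjoint => j; rewrite !inE => /andP [jk _].
  by apply: hdis; rewrite eq_sym.
by rewrite cards0 hS2; lia.
Qed.

Lemma cnt (D : {set T}) (x0 : T) :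
  #|[set j | ~~ [disjoint S j & D]]| <= #|D|.
Proof.
set G := [set j | _].
pose f j := odflt x0 [pick y in S j :&: D].
have hf : forall j, j \in G -> f j \in S j :&: D.
  move=> j; rewrite inE /f; case: pickP => [y hy //|h0].
  by rewrite -setI_eq0; case/negP; apply/eqP/setP => y; rewrite h0 inE.
rewrite -(card_in_imset (f := f) (D := G)).
  apply: subset_leq_card; apply/subsetP => _ /imsetP [j jG ->].
  by move: (hf j jG); rewrite inE => /andP [].
move=> j1 j2 h1 h2 e.
apply/eqP; apply/negPn/negP => hne.
move: (hf j1 h1) (hf j2 h2); rewrite e !inE => /andP [a1 _] /andP [a2 _].
by move: (disjointFr (hdis hne) a1); rewrite a2.
Qed.

Lemma free (D : {set T}) (x0 : T) :
  #|I| - #|D| <= #|[set j | [disjoint S j & D]]|.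
Proof.
have := cnt D x0.
have -> : [set j | ~~ [disjoint S j & D]] = ~: [set j | [disjoint S j & D]].
  by apply/setP => j; rewrite !inE.
have := cardsC [set j | [disjoint S j & D]]; lia.
Qed.
End E.

Section Main.
Variables (T : finType) (E : {set T}) (indep : pred {set T}) (t n : nat)
  (S : 'I_n -> {set T}).
Hypotheses (ht : 0 < t) (hM : is_matroid E indep) (htt : t2t_property E indep t)
  (hech : echidna E indep t S) (hn : 3 * t - 1 <= n).

Lemma sep (X : {set T}) x y i : #|X| <= 2 * t -> x \in X -> x \in S i ->
  y \in S i -> y \notin X -> exists K : {set 'I_n}, [/\ #|K| = t, i \in K &
  forall w, w \in \bigcup_(k in K) S k -> w \in X -> w = x].
Proof.
case: hech => hSE hS2 hdis hC.
move=> hX xX xS yS yX.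
set F0 := [set j | [disjoint S j & X :\ x]].
have h1 := free hdis (X :\ x) x.
rewrite card_ord -/F0 in h1.
have h2 : #|X :\ x| = #|X| - 1 by rewrite [in RHS](cardsD1 x X) xX; lia.
have h4 : (i \in F0) <= 1 by case: (i \in F0).
have h3 : t - 1 <= #|F0 :\ i| by rewrite (cardsD1 i F0) in h1; lia.
have [K' K'F K'c] := subset_card_ex h3.
have iK' : i \notin K' by apply/negP => /(subsetP K'F); rewrite !inE eqxx.
exists (i |: K'); split.
- by rewrite cardsU1 iK' K'c; lia.
- by rewrite !inE eqxx.
- move=> w /bigcupP [k]; rewrite !inE => /orP [/eqP -> | kK'] wS wX.
  + apply/eqP/negPn/negP => wx.
    have xy : x != y by apply/negP => /eqP xy; subst; rewrite xX in yX.
    have := three_in_two (hS2 i) xS yS wS xy; rewrite eq_sym => /(_ wx) yw.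
    by subst; rewrite wX in yX.
  + have := subsetP K'F k kK'; rewrite !inE => /andP [ki hk].
    have wx : w != x.
      by apply/negP => /eqP wx; subst w; move: (disjointFr (hdis _ _ ki) wS); rewrite xS.
    by move: (disjointFr hk wS); rewrite !inE wx wX.
Qed.

Lemma absorb D i x : cocircuit E indep D -> #|D| = 2 * t -> x \in D -> x \in S i ->
  S i \subset D.
Proof.
move=> hD hDc xD xS; apply/subsetP => y yS; apply/negPn/negP => yD.
have hle : #|D| <= 2 * t by rewrite hDc.
have [K [Kc iK hK]] := sep hle xD xS yS yD.
case: hech => _ _ _ hC.
apply: (ortho hM (hC K Kc) hD _ xD hK).
by apply/bigcupP; exists i.
Qed.

Lemma ex_Y (J : {set 'I_n}) z0 : z0 \in E -> z0 \notin \bigcup_(j in J) S j ->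
  exists Y : {set T}, [/\ Y \subset E, #|Y| = #|J|.+1, z0 \in Y,
    Y \subset z0 |: \bigcup_(j in J) S j &
    forall j, j \in J -> exists2 a, a \in Y & a \in S j].
Proof.
case: hech => hSE hS2 hdis hC.
move=> zE zJ.
pose pk j := odflt z0 [pick y in S j].
have hpk : forall j, pk j \in S j.
  move=> j; rewrite /pk; case: pickP => [y hy //|h0].
  have : #|S j| = 0 by apply: eq_card0 => y; rewrite h0.
  by rewrite hS2.
have zpk : z0 \notin pk @: J.
  apply/imsetP => [[j jJ e]]; move/negP: zJ; apply; apply/bigcupP; exists j => //.
  by rewrite e hpk.
exists (z0 |: pk @: J); split.
- apply/subsetP => w; rewrite !inE => /orP [/eqP -> //| /imsetP [j _ ->]].
  exact: (subsetP (hSE j) _ (hpk j)).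
- rewrite cardsU1 zpk card_in_imset //.
  move=> j1 j2 _ _ e; apply/eqP/negPn/negP => hne.
  by move: (disjointFr (hdis _ _ hne) (hpk j1)); rewrite e hpk.
- by rewrite !inE eqxx.
- apply/subsetP => w; rewrite !inE => /orP [-> //| /imsetP [j jJ ->]].
  by apply/orP; right; apply/bigcupP; exists j => //; exact: hpk.
- move=> j jJ; exists (pk j) => //; rewrite !inE; apply/orP; right.
  by apply/imsetP; exists j.
Qed.

Lemma absorb_circ C i x : circuit E indep C -> #|C| = 2 * t -> x \in C -> x \in S i ->
  S i \subset C.
Proof.
have hech' := hech; case: hech' => hSE hS2 hdis hC.
move=> hCc hCn xC xS; apply/subsetP => y yS; apply/negPn/negP => yC.
have hle : #|C| <= 2 * t by rewrite hCn.
have [K [Kc iK hK]] := sep hle xC xS yS yC.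
have xK : x \notin \bigcup_(j in K :\ i) S j.
  apply/bigcupP => [[j]]; rewrite !inE => /andP [ji _] xSj.
  by move: (disjointFr (hdis _ _ ji) xSj); rewrite xS.
have xE : x \in E := subsetP (hSE i) x xS.
have [Y [YE Yc xY YU YS]] := ex_Y xE xK.
have Yt : #|Y| = t by rewrite Yc; move: Kc; rewrite (cardsD1 i K) iK /= add1n.

have [_ [D hD [Dc YD]]] := htt YE Yt.
have UD : \bigcup_(k in K) S k \subset D.
  apply/subsetP => w /bigcupP [k kK wS].
  case: (eqVneq k i) => [ek | nki].
  - subst k; exact: (subsetP (absorb hD Dc (subsetP YD x xY) xS) w wS).
  - have [a aY aS] := YS k (ltac:(by rewrite !inE nki kK)).
    exact: (subsetP (absorb hD Dc (subsetP YD a aY) aS) w wS).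
have eD : \bigcup_(k in K) S k = D.
  by apply/eqP; rewrite eqEcard UD (card_bigcup2 hS2 hdis) Dc Kc leqnn.
apply: (ortho hM hCc hD xC (subsetP YD x xY)).
by move=> w wC; rewrite -eD => wU; exact: hK w wU wC.
Qed.

End Main.

Unset Implicit Arguments.

Theorem lemma4p4 (T : finType) (E : {set T}) (indep : pred {set T})
  (t n : nat) (S : 'I_n -> {set T}) (J : {set 'I_n}) (z : T) :
  0 < t -> is_matroid E indep -> t2t_property E indep t ->
  echidna E indep t S -> 3 * t - 1 <= n ->
  #|J| = t - 1 -> z \in E -> z \notin \bigcup_(i in J) S i ->
  (exists2 C, circuit E indep C &
     (#|C| = 2 * t) /\ z |: \bigcup_(i in J) S i \subset C) /\
  (exists2 D, cocircuit E indep D &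
     (#|D| = 2 * t) /\ z |: \bigcup_(i in J) S i \subset D).
Proof.
move=> ht hM htt hech hn hJ zE zJ.
have [Y [YE Yc zY YU YS]] := ex_Y hech zE zJ.
have Yt : #|Y| = t by rewrite Yc hJ; lia.
have [[C hC [Cc YC]] [D hD [Dc YD]]] := htt Y YE Yt.
split.
- exists C => //; split => //.
  apply/subsetP => w; rewrite !inE => /orP [/eqP -> | /bigcupP [j jJ wS]].
    exact: (subsetP YC z zY).
  have [a aY aS] := YS j jJ.
  exact: (subsetP (absorb_circ ht hM htt hech hn hC Cc (subsetP YC a aY) aS) w wS).
- exists D => //; split => //.
  apply/subsetP => w; rewrite !inE => /orP [/eqP -> | /bigcupP [j jJ wS]].
    exact: (subsetP YD z zY).
  have [a aY aS] := YS j jJ.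
  exact: (subsetP (absorb ht hM hech hn hD Dc (subsetP YD a aY) aS) w wS).
Qed.
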